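(* Consider the linear content-access game described in the context, with parameters $\tau>0$, beliefs $\pi_G\in[0,1]$, $\pi_B=1-\pi_G$, push rates $\lambda_{ps}(G)\geq \lambda_{ps}(B)>0$ and pull rate $\lambda_{pu}>0$, and let the common threshold $\alpha$ of all other users satisfy $0\le \alpha\le \beta_{\tau,B}$. Then: (i) if $\frac{\pi_G}{\lambda_{ps}(G)} \geq \frac{\pi_B}{\lambda_{ps}(B)}$, then $\beta^*(\alpha)=0$ is a best response to $\alpha$; (ii) if $\frac{\pi_G}{\lambda_{ps}(G)} \leq \frac{\pi_B}{\lambda_{ps}(B)}$ and $\frac{\pi_G}{\lambda_{ps}(G)+\lambda_{pu}} \geq \frac{\pi_B}{\lambda_{ps}(B)+\lambda_{pu}}$, then $\beta^*(\alpha)=\alpha$ is a best response to $\alpha$; (iii) if $\frac{\pi_G}{\lambda_{ps}(G)} \leq \frac{\pi_B}{\lambda_{ps}(B)}$ and $\frac{\pi_G}{\lambda_{ps}(G)+\lambda_{pu}} < \frac{\pi_B}{\lambda_{ps}(B)+\lambda_{pu}}$, then $\beta^*(\alpha)=\beta_{\tau,B}$ is a best response to $\alpha$.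
   Context: A content has a type $\theta\in\{G,B\}$ (good/bad) and lifetime $\tau>0$. Users hold beliefs $\pi_G\in[0,1]$ that the content is good and $\pi_B=1-\pi_G$ that it is bad. Each (pull) user uses a threshold strategy: access the content once its viewcount reaches a threshold. All users other than a tagged user use a common threshold $\alpha\ge 0$; the tagged user uses $\beta\ge0$ (a single user's deviation does not affect the viewcount). Linear dynamics: for a content of type $\theta$, with push rate $\lambda_{ps}(\theta)>0$ (assumed $\lambda_{ps}(G)\ge\lambda_{ps}(B)$) and a type-independent pull rate $\lambda_{pu}>0$, let $t_\alpha(\theta)=\alpha/\lambda_{ps}(\theta)$ and define the viewcount $X(t,\theta)=\lambda_{ps}(\theta)\,t+\lambda_{pu}\,(t-t_\alpha(\theta))^+$ for $t\ge0$. For $\beta\ge0$ let $t_\beta(\theta)=\min\{t\ge 0: X(t,\theta)=\beta\}$. Let $\beta_{\tau,B}=X(\tau,B)$, i.e. the value with $t_{\beta_{\tau,B}}(B)=\tau$. The tagged user's utility is $U(\alpha,\beta)=\pi_G(\tau-t_\beta(G))-\pi_B(\tau-t_\beta(B))$ for $0\le\beta\le\beta_{\tau,B}$, and a best response $\beta^*(\alpha)$ is a maximizer of $U(\alpha,\cdot)$ over $[0,\beta_{\tau,B}]$. *)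

(* Defs.v *)
From mathcomp Require Import all_boot all_order all_algebra.
From mathcomp Require Import boolp classical_sets reals.
Set Implicit Arguments. Unset Strict Implicit. Unset Printing Implicit Defensive.
Import Order.TTheory GRing.Theory Num.Theory.
Local Open Scope ring_scope.
Local Open Scope classical_set_scope.

Section Game.
Variable R : realType.

Definition t_alpha (lps alpha : R) : R := alpha / lps.

Definition viewcount (lps lpu alpha t : R) : R :=
  lps * t + lpu * Num.max (t - t_alpha lps alpha) 0.

(* t_beta(theta) = min {t >= 0 : X(t,theta) = beta}, rendered as the infimum
   of that set (which coincides with the minimum whenever it exists). *)
Definition t_beta (lps lpu alpha beta : R) : R :=
  inf [set t : R | 0 <= t /\ viewcount lps lpu alpha t = beta].

Definition beta_tauB (lpsB lpu alpha tau : R) : R := viewcount lpsB lpu alpha tau.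

Definition utility (tau piG lpsG lpsB lpu alpha beta : R) : R :=
  piG * (tau - t_beta lpsG lpu alpha beta)
  - (1 - piG) * (tau - t_beta lpsB lpu alpha beta).

Definition best_response (tau piG lpsG lpsB lpu alpha beta : R) : Prop :=
  0 <= beta <= beta_tauB lpsB lpu alpha tau /\
  forall b : R, 0 <= b <= beta_tauB lpsB lpu alpha tau ->
    utility tau piG lpsG lpsB lpu alpha b <= utility tau piG lpsG lpsB lpu alpha beta.

End Game.

(* Main.v *)
Require Import Defs.
From mathcomp Require Import all_boot all_order all_algebra.
From mathcomp Require Import boolp classical_sets reals.
From mathcomp Require Import ring lra.
Import Order.TTheory GRing.Theory Num.Theory.
Local Open Scope ring_scope.
Local Open Scope classical_set_scope.

Section S.
Variable R : realType.

Definition T (lps lpu alpha beta : R) : R :=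
  if beta <= alpha then beta / lps else alpha / lps + (beta - alpha) / (lps + lpu).

Lemma vc_lt (lps lpu alpha t s : R) : 0 < lps -> 0 < lpu -> t < s ->
  viewcount lps lpu alpha t < viewcount lps lpu alpha s.
Proof.
move=> hl hu ts; rewrite /viewcount /t_alpha.
set c := alpha / lps.
rewrite !maxEle.
case: ifP => h1; case: ifP => h2; nra.
Qed.

Lemma vc_T (lps lpu alpha beta : R) : 0 < lps -> 0 < lpu ->
  viewcount lps lpu alpha (T lps lpu alpha beta) = beta.
Proof.
move=> hl hu; rewrite /viewcount /t_alpha /T.
have hl0 : lps != 0 by rewrite gt_eqF.
have hs : lps + lpu != 0 by rewrite gt_eqF // addr_gt0.
case: ifP => hb.
- have -> : beta / lps - alpha / lps = (beta - alpha) / lps by field.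
  rewrite maxEle.
  have -> : (beta - alpha) / lps <= 0.
    by rewrite pmulr_lle0 ?invr_gt0 // subr_le0.
  by rewrite mulr0 addr0; field.
- have -> : alpha / lps + (beta - alpha) / (lps + lpu) - alpha / lps
     = (beta - alpha) / (lps + lpu) by ring.
  rewrite maxEle.
  have -> : ((beta - alpha) / (lps + lpu) <= 0) = false.
    apply/negbTE; rewrite -ltNge; apply: divr_gt0; last by rewrite addr_gt0.
    by rewrite subr_gt0 ltNge hb.
  by field; rewrite hs hl0.
Qed.

Lemma T_ge0 (lps lpu alpha beta : R) : 0 < lps -> 0 < lpu -> 0 <= alpha -> 0 <= beta ->
  0 <= T lps lpu alpha beta.
Proof.
move=> hl hu ha hb; rewrite /T; case: ifP => h.
- by rewrite divr_ge0 // ltW.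
- have h' : alpha < beta by rewrite ltNge h.
  apply: addr_ge0; first by rewrite divr_ge0 // ltW.
  by rewrite divr_ge0 // ?subr_ge0 ?ltW // addr_gt0.
Qed.

Lemma tbeta_T (lps lpu alpha beta : R) : 0 < lps -> 0 < lpu -> 0 <= alpha -> 0 <= beta ->
  t_beta lps lpu alpha beta = T lps lpu alpha beta.
Proof.
move=> hl hu ha hb; rewrite /t_beta.
suff -> : [set t : R | 0 <= t /\ viewcount lps lpu alpha t = beta]
   = [set T lps lpu alpha beta] by rewrite inf1.
apply/seteqP; split => t /=.
- case=> t0 ht.
  have e := @vc_T lps lpu alpha beta hl hu.
  case: (ltgtP t (T lps lpu alpha beta)) => // h.
  + by have := @vc_lt lps lpu alpha _ _ hl hu h; rewrite ht e ltxx.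
  + by have := @vc_lt lps lpu alpha _ _ hl hu h; rewrite ht e ltxx.
- by move=> ->; split; [exact: T_ge0 | exact: vc_T].
Qed.

Lemma T_lo (lps lpu alpha b : R) : b <= alpha -> T lps lpu alpha b = b * lps^-1.
Proof. by move=> h; rewrite /T h. Qed.

Lemma T_hi (lps lpu alpha b : R) : alpha <= b ->
  T lps lpu alpha b = alpha * lps^-1 + (b - alpha) * (lps + lpu)^-1.
Proof.
move=> h; rewrite /T; case: ifP => h2 //.
have -> : b = alpha by apply/eqP; rewrite eq_le h2 h.
by rewrite subrr mul0r addr0.
Qed.

Lemma cross (x y p q : R) : 0 < p -> 0 < q -> (y / q <= x / p) = (y * p <= x * q).
Proof. by move=> hp hq; rewrite ler_pdivlMr // mulrAC ler_pdivrMr. Qed.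

End S.
Arguments T {R}.

Theorem lemma1 (R : realType) (tau piG lpsG lpsB lpu alpha : R)
  (htau : 0 < tau) (hpi0 : 0 <= piG) (hpi1 : piG <= 1)
  (hB : 0 < lpsB) (hGB : lpsB <= lpsG) (hpu : 0 < lpu)
  (ha0 : 0 <= alpha) (ha1 : alpha <= beta_tauB lpsB lpu alpha tau) :
  (piG / lpsG >= (1 - piG) / lpsB ->
     best_response tau piG lpsG lpsB lpu alpha 0) /\
  (piG / lpsG <= (1 - piG) / lpsB ->
   piG / (lpsG + lpu) >= (1 - piG) / (lpsB + lpu) ->
     best_response tau piG lpsG lpsB lpu alpha alpha) /\
  (piG / lpsG <= (1 - piG) / lpsB ->
   piG / (lpsG + lpu) < (1 - piG) / (lpsB + lpu) ->
     best_response tau piG lpsG lpsB lpu alpha (beta_tauB lpsB lpu alpha tau)).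
Proof.
have hG : 0 < lpsG by apply: lt_le_trans hGB.
set Bm := beta_tauB lpsB lpu alpha tau.
have hBm0 : 0 <= Bm by apply: le_trans ha1.
have UE : forall b, 0 <= b -> utility tau piG lpsG lpsB lpu alpha b =
   piG * (tau - T lpsG lpu alpha b) - (1 - piG) * (tau - T lpsB lpu alpha b).
  by move=> b hb; rewrite /utility !tbeta_T.
set aG := lpsG^-1; set aB := lpsB^-1.
set cG := (lpsG + lpu)^-1; set cB := (lpsB + lpu)^-1.
set pB := 1 - piG.
set D1 := piG * aG - pB * aB.
set D2 := piG * cG - pB * cB.
have hcross1 : (pB / lpsB <= piG / lpsG) = (pB * lpsG <= piG * lpsB) by apply: cross.
have hcross2 : (pB / (lpsB + lpu) <= piG / (lpsG + lpu))
    = (pB * (lpsG + lpu) <= piG * (lpsB + lpu)) by apply: cross; apply: addr_gt0.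
split; [|split].
- move=> h1.
  have hD1 : 0 <= D1 by rewrite subr_ge0.
  have hD2 : 0 <= D2.
    rewrite subr_ge0 -/(pB / (lpsB + lpu)) -/(piG / (lpsG + lpu)) hcross2.
    move: h1; rewrite hcross1 => h1.
    have hpp : pB <= piG by nra.
    nra.
  split; first by rewrite lexx hBm0.
  move=> b /andP [hb0 hb1]; rewrite !UE // (@T_lo R lpsG lpu alpha 0 ha0) (@T_lo R lpsB lpu alpha 0 ha0) !mul0r.
  have [hba|hba] := leP b alpha.
  + rewrite !T_lo //.
    rewrite -/aG -/aB -/pB; have := mulr_ge0 hb0 hD1; rewrite /D1 => hh; nra.
  + have hab := ltW hba; rewrite !T_hi // -/aG -/aB -/cG -/cB -/pB.
    have := mulr_ge0 ha0 hD1.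
    have := mulr_ge0 (ltW (eqbRL (subr_gt0 alpha b) hba)) hD2.
    rewrite /D1 /D2 => hh1 hh2; nra.
- move=> h1 h2.
  have hD1 : D1 <= 0 by rewrite subr_le0.
  have hD2 : 0 <= D2 by rewrite subr_ge0.
  split; first by rewrite ha0 ha1.
  move=> b /andP [hb0 hb1]; rewrite !UE // (@T_lo R lpsG lpu alpha alpha (lexx _)) (@T_lo R lpsB lpu alpha alpha (lexx _)) -/aG -/aB -/pB.
  have [hba|hba] := leP b alpha.
  + rewrite !T_lo // -/aG -/aB -/pB.
    have := mulr_ge0_le0 (eqbRL (subr_ge0 b alpha) hba) hD1.
    rewrite /D1 => hh; nra.
  + have hab := ltW hba; rewrite !T_hi // -/aG -/aB -/cG -/cB -/pB.
    have := mulr_ge0 (ltW (eqbRL (subr_gt0 alpha b) hba)) hD2.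
    rewrite /D2 => hh; nra.
- move=> h1 h2.
  have hD1 : D1 <= 0 by rewrite subr_le0.
  have hD2 : D2 < 0 by rewrite subr_lt0.
  split; first by rewrite hBm0 lexx.
  move=> b /andP [hb0 hb1]; rewrite !UE // (@T_hi R lpsG lpu alpha Bm ha1) (@T_hi R lpsB lpu alpha Bm ha1) -/aG -/aB -/cG -/cB -/pB.
  have [hba|hba] := leP b alpha.
  + rewrite !T_lo // -/aG -/aB -/pB.
    have := mulr_ge0_le0 (eqbRL (subr_ge0 b alpha) hba) hD1.
    have := mulr_ge0_le0 (eqbRL (subr_ge0 alpha Bm) ha1) (ltW hD2).
    rewrite /D1 /D2 => hh1 hh2; nra.
  + have hab := ltW hba; rewrite !T_hi // -/aG -/aB -/cG -/cB -/pB.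
    have := mulr_ge0_le0 (eqbRL (subr_ge0 b Bm) hb1) (ltW hD2).
    rewrite /D2 => hh; nra.
Qed.
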